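(* Let $S$ be a monoid and let $\mathbb{R},\mathbb{S}$ be classes of $S$-acts (each closed under isomorphic copies and containing all trivial $S$-acts). Then there exists a Kurosh–Amitsur radical $r$ with $\mathbb{R}=\mathbb{R}_r$ and $\mathbb{S}=\mathbb{S}_r$ if and only if the following four conditions hold: (1) $\mathbb{R}\cap\mathbb{S}$ consists of trivial $S$-acts; (2) $\mathbb{R}$ is closed under homomorphic images; (3) $\mathbb{S}$ is closed under taking subacts; (4) every $S$-act $A$ has an $\mathbb{R}$-system $\Sigma$ such that the Rees factor $A/\rho_\Sigma$ belongs to $\mathbb{S}$.
   Context: An $S$-act over a monoid $S$ is a set $A$ with an action $(s,a)\mapsto sa$ satisfying $s(ta)=(st)a$ and $1a=a$; homomorphisms are action-preserving maps. An $S$-act is trivial if $|A|\le 1$. A congruence on $A$ is an equivalence relation $\rho$ with $a\rho a'\Rightarrow (sa)\rho(sa')$ for all $s\in S$; $\mathrm{Con}(A)$ is the lattice of congruences, with least element $\Delta_A$ (diagonal) and greatest $\nabla_A=A\times A$. For a subact $B\le A$, $\nabla_B$ is regarded as the congruence on $A$ whose only non-singleton class is $B$. A Rees congruence is a congruence each of whose classes is either a subact or a singleton; for a congruence $\rho$, $\Sigma_\rho$ denotes the set of classes of $\rho$ that are non-trivial subacts. Every system $\Sigma$ of pairwise disjoint non-trivial subacts of $A$ determines the Rees congruence $\rho_\Sigma$: $(a,b)\in\rho_\Sigma$ iff $a,b\in B$ for some $B\in\Sigma$, or $a=b$; $A/\rho_\Sigma$ is the Rees factor. For a class $\mathbb{C}$,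 a $\mathbb{C}$-system of $A$ is a system of pairwise disjoint non-trivial subacts of $A$ each belonging to $\mathbb{C}$. A (normal) Hoehnke radical is an assignment $r$ giving each $S$-act $A$ a congruence $r(A)\in\mathrm{Con}(A)$ such that (i) for every homomorphism $f:A\to B$, $(a,a')\in r(A)$ implies $(f(a),f(a'))\in r(B)$, and (ii) $r(A/r(A))=\Delta_{A/r(A)}$. Its radical class is $\mathbb{R}_r=\{A: r(A)=\nabla_A\}$ and semisimple class is $\mathbb{S}_r=\{A: r(A)=\Delta_A\}$. A Hoehnke radical $r$ is a Kurosh–Amitsur radical if (i) $r(A)$ is a Rees congruence for every $A$; (ii) $r(B)=\nabla_B$ for every $B\in\Sigma_{r(A)}$; (iii) whenever $\Sigma$ is an $\mathbb{R}_r$-system of $A$, for every $B\in\Sigma$ there is $C\in\Sigma_{r(A)}$ with $B\le C$. *)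

(* Defs.v *)
From Stdlib Require Import FunctionalExtensionality PropExtensionality ProofIrrelevance.

Set Implicit Arguments.
Unset Strict Implicit.

Record monoid := Monoid {
  mcar :> Type;
  mmul : mcar -> mcar -> mcar;
  mone : mcar;
  mmulA : forall x y z, mmul x (mmul y z) = mmul (mmul x y) z;
  mmul1l : forall x, mmul mone x = x;
  mmul1r : forall x, mmul x mone = x
}.
Arguments mmul {m} x y : rename.
Arguments mone {m} : rename.

Record act (S : monoid) := Act {
  acar :> Type;
  aop : mcar S -> acar -> acar;
  aopM : forall s t a, aop s (aop t a) = aop (@mmul S s t) a;
  aop1 : forall a, aop (@mone S) a = a
}.
Arguments aop {S} A s a : rename.

Section Acts.
Variable S : monoid.

Definition is_hom (A B : act S) (f : A -> B) : Prop :=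
  forall s a, f (aop A s a) = aop B s (f a).

Definition is_iso (A B : act S) (f : A -> B) : Prop :=
  is_hom f /\ exists g : B -> A, (forall a, g (f a) = a) /\ (forall b, f (g b) = b).

Definition surjective (A B : Type) (f : A -> B) : Prop := forall b, exists a, f a = b.

Definition trivial_act (A : act S) : Prop := forall a b : A, a = b.

Definition nontrivial_set (A : Type) (B : A -> Prop) : Prop :=
  exists x y, B x /\ B y /\ x <> y.

Definition is_equiv (X : Type) (rho : X -> X -> Prop) : Prop :=
  (forall x, rho x x) /\ (forall x y, rho x y -> rho y x) /\
  (forall x y z, rho x y -> rho y z -> rho x z).

Definition is_congruence (A : act S) (rho : A -> A -> Prop) : Prop :=
  is_equiv rho /\ forall s a b, rho a b -> rho (aop A s a) (aop A s b).

Definition Delta_rel (X : Type) (rho : X -> X -> Prop) : Prop := forall x y, rho x y -> x = y.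
Definition Nabla_rel (X : Type) (rho : X -> X -> Prop) : Prop := forall x y, rho x y.

(* subacts (possibly empty subsets closed under the action) *)
Definition is_subact (A : act S) (B : A -> Prop) : Prop :=
  forall s a, B a -> B (aop A s a).

Lemma sig_eq (X : Type) (P : X -> Prop) (x y : {a : X | P a}) :
  proj1_sig x = proj1_sig y -> x = y.
Proof.
  destruct x as [x px], y as [y py]; simpl; intros ->.
  f_equal; apply proof_irrelevance.
Qed.

Definition sub_op (A : act S) (B : A -> Prop) (HB : is_subact B)
  (s : mcar S) (x : {a : A | B a}) : {a : A | B a} :=
  exist _ (aop A s (proj1_sig x)) (HB s _ (proj2_sig x)).

Definition sub_act (A : act S) (B : A -> Prop) (HB : is_subact B) : act S.
Proof.
  refine (@Act S {a : A | B a} (sub_op HB) _ _).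
  - intros s t x; apply sig_eq; simpl; apply aopM.
  - intros x; apply sig_eq; simpl; apply aop1.
Defined.

Section Quot.
Variables (A : act S) (rho : A -> A -> Prop) (Hc : is_congruence rho).

Definition qcar := {P : A -> Prop | exists a, P = rho a}.

Lemma class_act (s : mcar S) (a0 : A) :
  (fun b => exists a, rho a0 a /\ rho (aop A s a) b) = rho (aop A s a0).
Proof.
  destruct Hc as [[Hr [Hs Ht]] Hcomp].
  apply functional_extensionality; intro b; apply propositional_extensionality; split.
  - intros [a [h1 h2]]. eapply Ht; [apply Hcomp; exact h1 | exact h2].
  - intros h; exists a0; split; [apply Hr | exact h].
Qed.

Definition q_op (s : mcar S) (P : qcar) : qcar.
Proof.
  refine (exist _ (fun b => exists a, proj1_sig P a /\ rho (aop A s a) b) _).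
  destruct P as [P [a0 ->]]; simpl.
  exists (aop A s a0); apply class_act.
Defined.

Lemma q_op_val (s : mcar S) (P : qcar) (a0 : A) :
  proj1_sig P = rho a0 -> proj1_sig (q_op s P) = rho (aop A s a0).
Proof. simpl; intros ->; apply class_act. Qed.

Definition quot_act : act S.
Proof.
  refine (@Act S qcar q_op _ _).
  - intros s t P; apply sig_eq.
    destruct P as [P0 [a0 e]].
    set (P := exist (fun Q => exists a, Q = rho a) P0 (ex_intro _ a0 e)).
    assert (e' : proj1_sig P = rho a0) by exact e.
    rewrite (q_op_val s (q_op_val t e')).
    rewrite (q_op_val (@mmul S s t) e').
    rewrite aopM; reflexivity.
  - intros P; apply sig_eq.
    destruct P as [P0 [a0 e]].
    set (P := exist (fun Q => exists a, Q = rho a) P0 (ex_intro _ a0 e)).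
    assert (e' : proj1_sig P = rho a0) by exact e.
    rewrite (q_op_val (@mone S) e').
    rewrite aop1; symmetry; exact e.
Defined.
End Quot.

Definition act_class := act S -> Prop.

Definition iso_closed (C : act_class) : Prop :=
  forall (A B : act S) (f : A -> B), is_iso f -> C A -> C B.

Definition contains_trivial (C : act_class) : Prop :=
  forall A, trivial_act A -> C A.

Definition C_system (C : act_class) (A : act S) (Sigma : (A -> Prop) -> Prop) : Prop :=
  (forall B, Sigma B -> nontrivial_set B /\ exists HB : is_subact B, C (sub_act HB)) /\
  (forall B1 B2, Sigma B1 -> Sigma B2 -> (exists x, B1 x /\ B2 x) ->
     forall y, B1 y <-> B2 y).

Definition rees_rel (A : act S) (Sigma : (A -> Prop) -> Prop) (a b : A) : Prop :=
  (exists B, Sigma B /\ B a /\ B b) \/ a = b.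

Definition rad_fun := forall A : act S, A -> A -> Prop.

Definition hoehnke_radical (r : rad_fun) : Prop :=
  exists Hc : (forall A, is_congruence (r A)),
    (forall (A B : act S) (f : A -> B), is_hom f ->
        forall a a', r A a a' -> r B (f a) (f a')) /\
    (forall A, Delta_rel (r (quot_act (Hc A)))).

Definition radical_class (r : rad_fun) : act_class := fun A => Nabla_rel (r A).
Definition semisimple_class (r : rad_fun) : act_class := fun A => Delta_rel (r A).

Definition is_rees_congruence (A : act S) (rho : A -> A -> Prop) : Prop :=
  is_congruence rho /\
  forall a, is_subact (rho a) \/ (forall b, rho a b -> b = a).

Definition KA_radical (r : rad_fun) : Prop :=
  hoehnke_radical r /\
  (forall A, is_rees_congruence (r A)) /\
  (* (ii) every B in Sigma_{r(A)} (class that is a non-trivial subact) is r-radical *)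
  (forall (A : act S) (a : A) (HB : is_subact (r A a)),
      nontrivial_set (r A a) -> radical_class r (sub_act HB)) /\
  (forall (A : act S) (Sigma : (A -> Prop) -> Prop), C_system (radical_class r) Sigma ->
     forall B, Sigma B ->
       exists c : A, is_subact (r A c) /\ nontrivial_set (r A c) /\
                     (forall x, B x -> r A c x)).

End Acts.

(* Main.v *)
Require Import Defs.
From Stdlib Require Import FunctionalExtensionality PropExtensionality ProofIrrelevance Classical ClassicalEpsilon.

Set Implicit Arguments.
Unset Strict Implicit.

Lemma quot_eq (S : monoid) (A : act S) (rho rho' : A -> A -> Prop)
  (H : is_congruence rho) (H' : is_congruence rho') : rho = rho' -> quot_act H = quot_act H'.
Proof. intros e; subst; rewrite (proof_irrelevance _ H H'); reflexivity. Qed.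

Lemma sub_eq (S : monoid) (A : act S) (B B' : A -> Prop)
  (HB : is_subact B) (HB' : is_subact B') : B = B' -> sub_act HB = sub_act HB'.
Proof. intros e; subst; rewrite (proof_irrelevance _ HB HB'); reflexivity. Qed.

Definition cls (S : monoid) {A : act S} (rho : A -> A -> Prop) (a : A) : qcar rho :=
  exist _ (rho a) (ex_intro _ a eq_refl).

Lemma cls_hom (S : monoid) (A : act S) (rho : A -> A -> Prop) (Hc : is_congruence rho) :
  @is_hom S A (quot_act Hc) (@cls S A rho).
Proof.
  intros s a; apply sig_eq; simpl. symmetry; apply (q_op_val Hc s (P := cls rho a)); reflexivity.
Qed.

Definition Rrel (S : monoid) (R : act S -> Prop) : rad_fun S :=
  fun A a b => a = b \/ exists C (HC : is_subact C), R (sub_act HC) /\ C a /\ C b.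
Arguments Rrel {S} R A a b.

Lemma image_R (S : monoid) (R : act S -> Prop)
  (H2 : forall (A B : act S) (f : A -> B), is_hom f -> surjective f -> R A -> R B)
  (A B : act S) (f : A -> B) (hf : is_hom f) (C : A -> Prop) (HC : is_subact C) :
  R (sub_act HC) -> exists D (HD : is_subact D), R (sub_act HD) /\ forall c, C c -> D (f c).
Proof.
  intros RC.
  set (D := fun y => exists c, C c /\ f c = y).
  assert (HD : is_subact D).
  { intros s y [c [Cc e]]. exists (aop A s c). split; [apply HC; auto|]. rewrite hf, e; auto. }
  exists D, HD. split.
  - set (g := fun x : sub_act HC => (exist D (f (proj1_sig x))
        (ex_intro _ (proj1_sig x) (conj (proj2_sig x) eq_refl)) : sub_act HD)).
    apply (H2 _ _ g); auto.
    + intros s x; apply sig_eq; simpl; apply hf.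
    + intros [y [c [Cc e]]]. exists (exist _ c Cc). apply sig_eq; simpl; exact e.
  - intros c Cc; exists c; auto.
Qed.

Lemma triv_sub (S : monoid) (R Ss : act S -> Prop)
  (H1 : forall A, R A -> Ss A -> trivial_act A)
  (H3 : forall (A : act S) (B : A -> Prop) (HB : is_subact B), Ss A -> Ss (sub_act HB))
  (X : act S) (D : X -> Prop) (HD : is_subact D) :
  Ss X -> R (sub_act HD) -> forall x y, D x -> D y -> x = y.
Proof.
  intros SX RD x y Dx Dy.
  pose proof (H1 _ RD (H3 _ _ HD SX) (exist _ x Dx) (exist _ y Dy)) as e.
  exact (f_equal (@proj1_sig _ _) e).
Qed.

Lemma Ss_delta (S : monoid) (R Ss : act S -> Prop)
  (H1 : forall A, R A -> Ss A -> trivial_act A)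
  (H3 : forall (A : act S) (B : A -> Prop) (HB : is_subact B), Ss A -> Ss (sub_act HB))
  (X : act S) : Ss X -> Delta_rel (Rrel R X).
Proof.
  intros SX x y [e|[C [HC [RC [Cx Cy]]]]]; auto.
  eapply triv_sub; eauto.
Qed.

Lemma K (S : monoid) (R Ss : act S -> Prop)
  (H1 : forall A, R A -> Ss A -> trivial_act A)
  (H2 : forall (A B : act S) (f : A -> B), is_hom f -> surjective f -> R A -> R B)
  (H3 : forall (A : act S) (B : A -> Prop) (HB : is_subact B), Ss A -> Ss (sub_act HB))
  (A : act S) (Sig : (A -> Prop) -> Prop) (Hc : is_congruence (rees_rel Sig)) :
  C_system R Sig -> Ss (quot_act Hc) -> forall a b, Rrel R A a b <-> rees_rel Sig a b.
Proof.
  intros HSig SQ a b; split.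
  - intros [e|[C [HC [RC [Ca Cb]]]]]; [right; exact e|].
    destruct (image_R H2 (cls_hom Hc) RC) as [D [HD [RD HDc]]].
    pose proof (triv_sub H1 H3 SQ RD (HDc a Ca) (HDc b Cb)) as e.
    apply (f_equal (@proj1_sig _ _)) in e. simpl in e.
    rewrite e. right; reflexivity.
  - intros [[B [SB [Ba Bb]]]|e]; [|left; exact e].
    destruct (proj1 HSig B SB) as [_ [HB RB]].
    right; exists B, HB; auto.
Qed.

Lemma cong_transfer (S : monoid) (A : act S) (rho rho' : A -> A -> Prop) :
  is_congruence rho -> (forall a b, rho a b <-> rho' a b) -> is_congruence rho'.
Proof.
  intros [[Hr [Hs Ht]] Hcomp] E.
  split; [split; [|split]|].
  - intros x; apply E; auto.
  - intros x y h; apply E; apply Hs; apply E; auto.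
  - intros x y z h1 h2; apply E; eapply Ht; apply E; eauto.
  - intros s a b h; apply E; apply Hcomp; apply E; auto.
Qed.

Lemma rel_eq (X : Type) (rho rho' : X -> X -> Prop) :
  (forall a b, rho a b <-> rho' a b) -> rho = rho'.
Proof.
  intros E; apply functional_extensionality; intro a;
  apply functional_extensionality; intro b; apply propositional_extensionality; auto.
Qed.

Lemma quot_iso (S : monoid) (A : act S) (rho : A -> A -> Prop) (Hc : is_congruence rho) :
  Delta_rel rho -> exists g : quot_act Hc -> A, is_iso g.
Proof.
  intros HD.
  destruct Hc as [[Hr [Hs Ht]] Hcomp] eqn:EHc.
  assert (key : forall x y, rho x = rho y -> x = y).
  { intros x y e; apply HD; rewrite e; apply Hr. }
  set (g := fun P : quot_act Hc =>
          proj1_sig (constructive_indefinite_description _ (proj2_sig P))).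
  assert (gs : forall P : quot_act Hc, proj1_sig P = rho (g P)).
  { intros P; exact (proj2_sig (constructive_indefinite_description _ (proj2_sig P))). }
  rewrite <- EHc in *.
  exists g; split.
  - intros s P. apply key. rewrite <- gs. apply q_op_val. apply gs.
  - exists (cls rho). split.
    + intros P; apply sig_eq; simpl; symmetry; apply gs.
    + intros a; apply key. rewrite <- gs. reflexivity.
Qed.

Lemma backward (S : monoid) (R Ss : act S -> Prop) :
  iso_closed R -> iso_closed Ss -> contains_trivial R -> contains_trivial Ss ->
   ((forall A, R A -> Ss A -> trivial_act A) /\
    (forall (A B : act S) (f : A -> B), is_hom f -> surjective f -> R A -> R B) /\
    (forall (A : act S) (B : A -> Prop) (HB : is_subact B), Ss A -> Ss (sub_act HB)) /\
    (forall A : act S, exists Sigma : (A -> Prop) -> Prop,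
        C_system R Sigma /\
        exists Hc : is_congruence (rees_rel Sigma), Ss (quot_act Hc))) ->
  (exists r : rad_fun S, KA_radical r /\
      (forall A, R A <-> radical_class r A) /\
      (forall A, Ss A <-> semisimple_class r A)).
Proof.
  intros IR IS TR TS [H1 [H2 [H3 H4]]].
  assert (Hcong : forall A, is_congruence (Rrel R A)).
  { intros A; destruct (H4 A) as [Sig [HSig [Hc SQ]]].
    eapply cong_transfer; [exact Hc|]. intros a b; symmetry; exact (K H1 H2 H3 HSig SQ a b). }
  assert (HQ : forall A, Ss (quot_act (Hcong A))).
  { intros A; destruct (H4 A) as [Sig [HSig [Hc SQ]]].
    erewrite quot_eq; [exact SQ|]. apply rel_eq. exact (K H1 H2 H3 HSig SQ). }
  assert (Hrad : forall A, R A <-> radical_class (Rrel R) A).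
  { intros A; split.
    - intros RA x y; right.
      assert (HT : is_subact (fun _ : A => True)) by (intros s a h; exact I).
      exists (fun _ => True), HT; split; [|auto].
      apply (H2 A _ (fun a => (exist _ a I : sub_act HT))); auto.
      + intros s a; apply sig_eq; reflexivity.
      + intros [a u]; exists a; apply sig_eq; reflexivity.
    - intros N. destruct (classic (trivial_act A)) as [T|T]; [apply TR; auto|].
      apply not_all_ex_not in T; destruct T as [x T].
      apply not_all_ex_not in T; destruct T as [y T].
      destruct (H4 A) as [Sig [HSig [Hc SQ]]].
      pose proof (fun a b => K H1 H2 H3 HSig SQ a b) as KK.
      destruct (proj1 (KK x y) (N x y)) as [[B [SB [Bx By]]]|e]; [|contradiction].
      assert (allB : forall z, B z).
      { intros z. destruct (proj1 (KK x z) (N x z)) as [[B' [SB' [Bx' Bz]]]|e].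
        - apply (proj2 HSig B' B SB' SB (ex_intro _ x (conj Bx' Bx)) z); auto.
        - subst; auto. }
      destruct (proj1 HSig B SB) as [_ [HB RB]].
      apply (H2 _ _ (@proj1_sig _ _ : sub_act HB -> A)); auto.
      + intros s a; reflexivity.
      + intros z; exists (exist _ z (allB z)); reflexivity. }
  assert (Hss : forall A, Ss A <-> semisimple_class (Rrel R) A).
  { intros A; split.
    - apply Ss_delta; auto.
    - intros HD. destruct (quot_iso (Hcong A) HD) as [g Hg].
      eapply IS; [exact Hg|]. apply HQ. }
  assert (rees_class : forall (A : act S) (a b : A), Rrel R A a b -> a <> b -> is_subact (Rrel R A a)).
  { intros A a b [e|[C [HC [RC [Ca Cb]]]]] n; [contradiction|].
    intros s c [e|[C' [HC' [RC' [C'a C'c]]]]].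
    - subst. right; exists C, HC; split; auto; split; auto.
    - right; exists C', HC'; split; auto; split; auto. }
  exists (Rrel R). split; [|split; auto].
  split; [|split; [|split]].
  - exists Hcong. split.
    + intros A B f hf a a' [e|[C [HC [RC [Ca Ca']]]]]; [left; subst; auto|].
      destruct (image_R H2 hf RC) as [D [HD [RD HDc]]].
      right; exists D, HD; auto.
    + intros A; apply Ss_delta with Ss; auto.
  - intros A; split; [apply Hcong|]. intro a.
    destruct (classic (exists b, Rrel R A a b /\ b <> a)) as [[b [h n]]|n].
    + left; apply rees_class with b; auto.
    + right; intros b h; apply NNPP; intro; apply n; eauto.
  - intros A a HB [x [y [Hx [Hy nxy]]]].
    apply Hrad.
    assert (exb : exists b, Rrel R A a b /\ b <> a).
    { destruct (classic (x = a)) as [e|e]; [subst; exists y; auto|exists x; auto]. }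
    destruct exb as [b [hb nb]].
    destruct (H4 A) as [Sig [HSig [Hc SQ]]].
    pose proof (fun a b => K H1 H2 H3 HSig SQ a b) as KK.
    destruct (proj1 (KK a b) hb) as [[B [SB [Ba Bb]]]|e]; [|subst; contradiction].
    assert (EB : B = Rrel R A a).
    { apply functional_extensionality; intro z; apply propositional_extensionality; split.
      - intros Bz; apply KK; left; exists B; auto.
      - intros h. destruct (proj1 (KK a z) h) as [[B' [SB' [Ba' Bz]]]|e].
        + apply (proj2 HSig B' B SB' SB (ex_intro _ a (conj Ba' Ba)) z); auto.
        + subst; auto. }
    destruct (proj1 HSig B SB) as [_ [HB' RB]].
    rewrite (sub_eq HB' HB EB) in RB; exact RB.
  - intros A Sig' HSig' B SB.
    destruct (proj1 HSig' B SB) as [[x [y [Bx [By nxy]]]] [HB RB]].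
    apply Hrad in RB.
    exists x. split; [|split].
    + apply rees_class with y; auto. right; exists B, HB; auto.
    + exists x, y; split; [left; auto|split; [right; exists B, HB; auto|auto]].
    + intros z Bz; right; exists B, HB; auto.
Qed.

Lemma forward (S : monoid) (R Ss : act S -> Prop) :
  (exists r : rad_fun S, KA_radical r /\
      (forall A, R A <-> radical_class r A) /\
      (forall A, Ss A <-> semisimple_class r A)) ->
   ((forall A, R A -> Ss A -> trivial_act A) /\
    (forall (A B : act S) (f : A -> B), is_hom f -> surjective f -> R A -> R B) /\
    (forall (A : act S) (B : A -> Prop) (HB : is_subact B), Ss A -> Ss (sub_act HB)) /\
    (forall A : act S, exists Sigma : (A -> Prop) -> Prop,
        C_system R Sigma /\
        exists Hc : is_congruence (rees_rel Sigma), Ss (quot_act Hc))).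
Proof.
  intros [r [[[Hc [Hhom Hdel]] [Hrees [Hii Hiii]]] [HR HS]]].
  split; [|split; [|split]].
  - intros A RA SA x y. apply (proj1 (HS A) SA). apply (proj1 (HR A) RA).
  - intros A B f hf sf RA. apply HR. intros b b'.
    destruct (sf b) as [a ea], (sf b') as [a' ea']; subst.
    apply Hhom; auto. apply (proj1 (HR A) RA).
  - intros A B HB SA. apply HS. intros x y h. apply sig_eq.
    apply (proj1 (HS A) SA).
    apply (Hhom _ _ (@proj1_sig _ _ : sub_act HB -> A)); auto.
    intros s a; reflexivity.
  - intros A.
    destruct (Hc A) as [[Hr [Hs Ht]] Hcomp].
    set (Sig := fun B : A -> Prop => exists a, B = r A a /\ is_subact (r A a) /\ nontrivial_set (r A a)).
    exists Sig. split.
    + split.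
      * intros B [a [-> [HB nt]]]. split; auto. exists HB. apply HR. apply Hii; auto.
      * intros B1 B2 [a1 [-> _]] [a2 [-> _]] [x [h1 h2]] y.
        assert (r A a1 a2) by eauto.
        split; intro; eauto.
    + assert (Heq : rees_rel Sig = r A).
      { apply rel_eq. intros a b; split.
        - intros [[B [[c [-> _]] [Ba Bb]]]|e]; [eauto|subst; auto].
        - intros h. destruct (classic (a = b)) as [e|n]; [right; auto|].
          left; exists (r A a); split; [|split; auto].
          exists a; split; [reflexivity|split].
          + destruct (proj2 (Hrees A) a) as [sb|sg]; auto.
            exfalso; apply n; symmetry; auto.
          + exists a, b; auto. }
      rewrite Heq. exists (Hc A). apply HS. apply Hdel.
Qed.

Theorem lemma2p2 (S : monoid) (R Ss : act S -> Prop) :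
  iso_closed R -> iso_closed Ss -> contains_trivial R -> contains_trivial Ss ->
  ((exists r : rad_fun S, KA_radical r /\
      (forall A, R A <-> radical_class r A) /\
      (forall A, Ss A <-> semisimple_class r A))
   <->
   ((forall A, R A -> Ss A -> trivial_act A) /\
    (forall (A B : act S) (f : A -> B), is_hom f -> surjective f -> R A -> R B) /\
    (forall (A : act S) (B : A -> Prop) (HB : is_subact B), Ss A -> Ss (sub_act HB)) /\
    (forall A : act S, exists Sigma : (A -> Prop) -> Prop,
        C_system R Sigma /\
        exists Hc : is_congruence (rees_rel Sigma), Ss (quot_act Hc)))).
Proof.
  intros IR IS TR TS; split; [apply forward|apply backward; auto].
Qed.
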